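(* Let $p\neq 3$ be a prime, $a\in\mathbb{Q}_p$ with $|a|_p<1$, and assume $\sqrt{a^2+4}$ exists in $\mathbb{Q}_p$ (automatic for $p\ge 5$; for $p=2$ equivalent to $|a|_2\le 1/8$). Let $f(x)=x^3+ax^2$ on $\mathbb{Q}_p$ and let $x_\sigma$ ($\sigma=2,3$) be one of the fixed points $x_{2,3}=\frac{-a\pm\sqrt{a^2+4}}{2}$. The following conditions are equivalent: (i) $SI(x_\sigma)=B_1(x_\sigma)$; (ii) there is $\gamma_0\in S_1(0)$ such that $|\gamma_0^2+3x_\sigma\gamma_0+3|_p<1$; (iii) $\sqrt{-3}$ exists in $\mathbb{Q}_p$.
   Context: $\mathbb{Q}_p$ is the field of $p$-adic numbers with norm $|\cdot|_p$. $B_r(c)=\{x:|x-c|_p<r\}$, $S_r(c)=\{x:|x-c|_p=r\}$. A ball $B_r(x^{(0)})$ centered at a fixed point $x^{(0)}$ of $f$ is a Siegel disc if for every $\rho<r$ the sphere $S_\rho(x^{(0)})$ is invariant, i.e. $x\in S_\rho(x^{(0)})$ implies $f^{(n)}(x)\in S_\rho(x^{(0)})$ for all $n\ge1$ ($f^{(n)}$ the $n$-th iterate); $SI(x^{(0)})$, the maximal Siegel disc, is the union of all Siegel discs centered at $x^{(0)}$. *)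

(* Defs.v *)
From HB Require Import structures.
From mathcomp Require Import all_boot all_order all_algebra.
From mathcomp Require Import reals.
Set Implicit Arguments. Unset Strict Implicit. Unset Printing Implicit Defensive.
Import Order.TTheory GRing.Theory Num.Theory.
Local Open Scope ring_scope.

Definition padic_abs_rat (R : realType) (p : nat) (q : rat) : R :=
  if q == 0 then 0
  else (p%:R : R) ^ (Posz (logn p (absz (denq q))) - Posz (logn p (absz (numq q)))).

(* [is_Qp p nrm] : the field K equipped with nrm : K -> R is (a model of) the
   field Q_p of p-adic numbers with its norm |.|_p, i.e. a completion of
   (Q, |.|_p): nrm is a non-archimedean absolute value, it extends |.|_p on
   the canonical copy of Q in K, K is complete, and Q is dense in K.  These
   properties characterise (Q_p, |.|_p) up to isometric isomorphism. *)
Definition is_Qp (p : nat) (R : realType) (K : fieldType) (nrm : K -> R) : Prop :=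
  (forall x : K, 0 <= nrm x) /\
  (forall x : K, nrm x = 0 <-> x = 0) /\
  (forall x y : K, nrm (x * y) = nrm x * nrm y) /\
  (forall x y : K, nrm (x + y) <= Num.max (nrm x) (nrm y)) /\
  (forall q : rat, nrm (ratr q) = padic_abs_rat R p q) /\
  (forall u : nat -> K,
        (forall e : R, 0 < e -> exists N : nat, forall m n : nat,
            (N <= m)%N -> (N <= n)%N -> nrm (u m - u n) < e) ->
        exists l : K, forall e : R, 0 < e -> exists N : nat, forall n : nat,
            (N <= n)%N -> nrm (u n - l) < e) /\
  (forall (x : K) (e : R), 0 < e -> exists q : rat, nrm (x - ratr q) < e).

Section Dyn.
Variables (R : realType) (K : fieldType) (nrm : K -> R).

Definition ballp (c : K) (r : R) (x : K) : Prop := nrm (x - c) < r.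
Definition spherep (c : K) (r : R) (x : K) : Prop := nrm (x - c) = r.

Definition siegel_disc (f : K -> K) (x0 : K) (r : R) : Prop :=
  f x0 = x0 /\
  forall rho : R, rho < r -> forall x : K, spherep x0 rho x ->
    forall n : nat, (1 <= n)%N -> spherep x0 rho (iter n f x).

Definition SI (f : K -> K) (x0 : K) (x : K) : Prop :=
  exists r : R, siegel_disc f x0 r /\ ballp x0 r x.
End Dyn.

(* Main.v *)
Require Import Defs.
From HB Require Import structures.
From mathcomp Require Import all_boot all_order all_algebra.
From mathcomp Require Import reals ring lra.
From Stdlib Require Import Classical.
Import Order.TTheory GRing.Theory Num.Theory.
Local Open Scope ring_scope.

Lemma geo (R : realType) (c e : R) : 0 <= c -> c < 1 -> 0 < e -> exists N : nat, c ^+ N < e.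
Proof.
move=> c0 c1 e0.
have [->|cn0] := eqVneq c 0; first by exists 1%N; rewrite expr1.
have cp : 0 < c by rewrite lt_def cn0 c0.
have ci0 : 0 < c^-1 by rewrite invr_gt0.
set d := c^-1 - 1.
have dp : 0 < d by rewrite subr_gt0 invf_gt1.
have ci : c^-1 = 1 + d by rewrite /d addrC subrK.
have bern : forall n : nat, 1 + n%:R * d <= (c^-1) ^+ n.
  elim => [|n IH]; first by rewrite mul0r addr0 expr0.
  rewrite exprS mulrSr ci.
  rewrite ci in IH.
  have hn : 0 <= (n%:R : R) by apply: ler0n.
  have hX1 : 1 <= (1 + d) ^+ n by apply: le_trans IH; rewrite lerDl mulr_ge0 // ltW.
  have h3 : d <= d * (1 + d) ^+ n by rewrite ler_peMr // ltW.
  rewrite mulrDl mul1r; lra.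
have hb : 0 <= e^-1 / d by rewrite divr_ge0 // ltW // invr_gt0.
have hN := archi_boundP hb.
set N := Num.Def.archi_bound _ in hN.
exists N.
have h1 : e^-1 < N%:R * d by rewrite -ltr_pdivrMr.
have h2 : e^-1 < (c^-1) ^+ N.
  apply: lt_le_trans (bern N); apply: lt_le_trans h1 _; rewrite lerDr ler01 //.
rewrite -(invrK c) exprVn -(invrK e) ltf_pV2 ?posrE ?exprn_gt0 ?invr_gt0 //.
Qed.

Section Basic.
Variables (p : nat) (R : realType) (K : fieldType) (nrm : K -> R).
Hypothesis HK : is_Qp p nrm.
Hypothesis hp : prime p.

Lemma n_ge0 x : 0 <= nrm x. Proof. by case: HK. Qed.
Lemma n_eq0 x : nrm x = 0 <-> x = 0. Proof. by case: HK => _ []. Qed.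
Lemma nM x y : nrm (x * y) = nrm x * nrm y. Proof. by case: HK => _ [] _ []. Qed.
Lemma nD x y : nrm (x + y) <= Num.max (nrm x) (nrm y).
Proof. by case: HK => _ [] _ [] _ []. Qed.
Lemma nrat q : nrm (ratr q) = padic_abs_rat R p q.
Proof. by case: HK => _ [] _ [] _ [] _ []. Qed.

Lemma n0 : nrm 0 = 0. Proof. exact/n_eq0. Qed.
Lemma n1 : nrm 1 = 1.
Proof.
have h : nrm 1 = nrm 1 * nrm 1 by rewrite -nM mulr1.
have h0 : nrm 1 != 0 by apply/eqP => /n_eq0 /eqP; rewrite oner_eq0.
by apply: (mulfI h0); rewrite -h mulr1.
Qed.
Lemma nN1 : nrm (-1) = 1.
Proof.
have h : nrm (-1) * nrm (-1) = 1 by rewrite -nM mulrNN mulr1 n1.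
have := n_ge0 (-1); nra.
Qed.
Lemma nN x : nrm (- x) = nrm x.
Proof. by rewrite -mulN1r nM nN1 mul1r. Qed.
Lemma nB x y : nrm (x - y) = nrm (y - x).
Proof. by rewrite -nN opprB. Qed.
Lemma nX x n : nrm (x ^+ n) = nrm x ^+ n.
Proof. elim: n => [|n IH]; first by rewrite !expr0 n1. by rewrite !exprS nM IH. Qed.
Lemma nV x : nrm (x^-1) = (nrm x)^-1.
Proof.
have [->|x0] := eqVneq x 0; first by rewrite invr0 n0 invr0.
have h : nrm x * nrm x^-1 = 1 by rewrite -nM mulfV // n1.
have hx : nrm x != 0 by apply/eqP => /n_eq0 /eqP; rewrite (negPf x0).
by rewrite -[LHS]mul1r -(mulVf hx) -mulrA h mulr1.
Qed.
Lemma nDiv x y : nrm (x / y) = nrm x / nrm y.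
Proof. by rewrite nM nV. Qed.

Lemma nDle x y c : nrm x <= c -> nrm y <= c -> nrm (x + y) <= c.
Proof. move=> h1 h2; apply: le_trans (nD x y) _; by rewrite ge_max h1 h2. Qed.
Lemma nDlt x y c : nrm x < c -> nrm y < c -> nrm (x + y) < c.
Proof. move=> h1 h2; apply: le_lt_trans (nD x y) _; by rewrite gt_max h1 h2. Qed.
Lemma nBle x y c : nrm x <= c -> nrm y <= c -> nrm (x - y) <= c.
Proof. by move=> h1 h2; apply: nDle; rewrite ?nN. Qed.
Lemma nBlt x y c : nrm x < c -> nrm y < c -> nrm (x - y) < c.
Proof. by move=> h1 h2; apply: nDlt; rewrite ?nN. Qed.
Lemma nD_eq x y : nrm x < nrm y -> nrm (x + y) = nrm y.
Proof.
move=> h; apply/eqP; rewrite eq_le; apply/andP; split.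
  by apply: nDle => //; exact: ltW.
rewrite leNgt; apply/negP => h2.
have : nrm ((x + y) - x) < nrm y by apply: nBlt.
by rewrite addrC addKr ltxx.
Qed.
Lemma nD_eq' x y : nrm x < nrm y -> nrm (y + x) = nrm y.
Proof. by rewrite addrC; apply: nD_eq. Qed.

Lemma nnat_le1 n : nrm (n%:R) <= 1.
Proof.
elim: n => [|n IH]; first by rewrite n0.
by rewrite mulrSr; apply: nDle => //; rewrite n1.
Qed.

Lemma nint_le1 (z : int) : nrm (z%:~R) <= 1.
Proof. case: z => n; first by rewrite -pmulrn nnat_le1.
by rewrite NegzE mulrNz nN -pmulrn nnat_le1. Qed.

Lemma np : nrm (p%:R) = (p%:R)^-1.
Proof.
rewrite -(ratr_nat K p) nrat /padic_abs_rat.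
have p0 : (p%:R : rat) != 0 by rewrite pnatr_eq0 -lt0n prime_gt0.
rewrite (negPf p0).
have -> : (p%:R : rat) = (p%:Z)%:~R by [].
rewrite denq_int numq_int /= logn1 logn_prime // eqxx sub0r.
by rewrite -exprnN expr1.
Qed.


Lemma p_gt1 : (1 : R) < p%:R.
Proof. by rewrite ltr1n prime_gt1. Qed.
Lemma p_gt0 : (0 : R) < p%:R.
Proof. exact: lt_trans ltr01 p_gt1. Qed.
Lemma pinv_lt1 : (p%:R : R)^-1 < 1.
Proof. by rewrite invf_lt1 ?p_gt0 ?p_gt1. Qed.
Lemma np_lt1 : nrm (p%:R) < 1.
Proof. by rewrite np pinv_lt1. Qed.

Lemma nnat_dvd n : (p %| n)%N -> nrm (n%:R) <= (p%:R)^-1.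
Proof.
move=> /divnK <-; rewrite natrM nM np.
by apply: ler_piMl; [rewrite invr_ge0 ltW ?p_gt0 | apply: nnat_le1].
Qed.
Lemma nnat_dvd_lt n : (p %| n)%N -> nrm (n%:R) < 1.
Proof. by move=> /nnat_dvd h; apply: le_lt_trans h pinv_lt1. Qed.

Lemma nnat_ndvd n : ~~ (p %| n)%N -> nrm (n%:R) = 1.
Proof.
move=> hn.
have [a _ ha] := Bezoutl n (prime_gt0 hp).
move: ha; rewrite (eqP (_ : coprime p n)) ?prime_coprime // => /divnK ha.
have hK : (1 + a%:R * n%:R : K) = ((1 + a * n) %/ p)%:R * p%:R.
  by rewrite -[in RHS]natrM ha natrD natrM.
have h1 : nrm (a%:R * n%:R : K) = 1.
  have -> : (a%:R * n%:R : K) = - 1 + ((1 + a * n) %/ p)%:R * p%:R by rewrite -hK; ring.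
  rewrite nD_eq' ?nN1 // nM.
  apply: le_lt_trans np_lt1; apply: ler_piMl; [exact: n_ge0 | exact: nnat_le1].
move: h1; rewrite nM => h1.
have := nnat_le1 a; have := nnat_le1 n; have := n_ge0 (a%:R); have := n_ge0 (n%:R).
nra.
Qed.

Lemma nint (z : int) : nrm (z%:~R) = nrm ((`|z|%N)%:R).
Proof. by case: z => n //; rewrite NegzE mulrNz nN abszN. Qed.

Lemma nratr_split q :
  nrm (ratr q : K) = nrm ((`|numq q|%N)%:R : K) / nrm ((`|denq q|%N)%:R : K).
Proof. by rewrite /ratr nDiv !nint. Qed.

Lemma coprime_not_both A B : coprime A B -> (p %| A)%N -> (p %| B)%N -> False.
Proof.
move=> /eqP hc hA hB.
have : (p %| gcdn A B)%N by rewrite dvdn_gcd hA hB.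
by rewrite hc dvdn1 => /eqP hp1; move: (prime_gt1 hp); rewrite hp1.
Qed.

Lemma nrat_gt1 q : 1 < nrm (ratr q : K) -> p%:R <= nrm (ratr q : K).
Proof.
rewrite nratr_split.
have hc := coprime_num_den q.
set A := `|numq q|%N; set B := `|denq q|%N.
have [hB|hB] := boolP (p %| B)%N; last first.
  by rewrite (@nnat_ndvd B hB) divr1 => h; move: (nnat_le1 A); rewrite leNgt h.
have hA : ~~ (p %| A)%N by apply/negP => hA; exact: (@coprime_not_both _ _ hc hA hB).
rewrite (@nnat_ndvd A hA) div1r => hgt.
have hB0 : 0 < nrm (B%:R : K).
  rewrite lt_def n_ge0 andbT; apply/eqP => h; move: hgt; rewrite h invr0 ltr10.
  by [].
rewrite -(invrK (p%:R)) lef_pV2 ?posrE ?invr_gt0 ?p_gt0 //.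
exact: nnat_dvd.
Qed.

Lemma nval_gt1 x : 1 < nrm x -> p%:R <= nrm x.
Proof.
move=> hx.
have hx0 : 0 < nrm x by apply: lt_trans ltr01 hx.
case: HK => _ [] _ [] _ [] _ [] _ [] _ hd.
have [q hq] := hd x (nrm x) hx0.
have e : nrm (ratr q : K) = nrm x.
  have -> : (ratr q : K) = -(x - ratr q) + x by ring.
  by rewrite nD_eq // nN.
by rewrite -e; apply: nrat_gt1; rewrite e.
Qed.


Section Two.
Hypothesis hp2 : p = 2%N.

Lemma even_lt1 k : ~~ odd k -> nrm (k%:R) < 1.
Proof. by rewrite -dvdn2 -hp2 => /nnat_dvd_lt. Qed.

Lemma odd_m1 m : odd m -> nrm (m%:R - 1) < 1.
Proof. case: m => [|k] //= hk; by rewrite mulrSr addrK even_lt1. Qed.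
Lemma odd_p1 m : odd m -> nrm (m%:R + 1) < 1.
Proof. move=> hm; by rewrite -mulrSr even_lt1 //= hm. Qed.

Lemma oddint (z : int) : odd `|z|%N -> nrm (z%:~R - 1) < 1.
Proof.
case: z => m /= hm; first exact: odd_m1.
rewrite NegzE mulrNz -opprD nN -pmulrn; exact: odd_p1.
Qed.

Lemma rat_unit2 q : nrm (ratr q : K) = 1 -> nrm (ratr q - 1 : K) < 1.
Proof.
move=> h1; move: (h1); rewrite nratr_split => hq.
have hc := coprime_num_den q.
set A := `|numq q|%N in hc hq; set B := `|denq q|%N in hc hq.
have hB0 : nrm (B%:R : K) != 0.
  by apply/eqP => h; move: hq; rewrite h invr0 mulr0 => /eqP; rewrite eq_sym oner_eq0.
have hAB : nrm (A%:R : K) = nrm (B%:R : K).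
  by rewrite -[LHS](divfK hB0) hq mul1r.
have hB : ~~ (p %| B)%N.
  apply/negP => hB.
  have hA : (p %| A)%N.
    apply/negPn/negP => hA; move: (@nnat_dvd_lt _ hB); rewrite -hAB nnat_ndvd //.
    by rewrite ltxx.
  exact: (@coprime_not_both _ _ hc hA hB).
have hA : ~~ (p %| A)%N.
  by apply/negP => hA; move: (@nnat_dvd_lt _ hA); rewrite hAB nnat_ndvd // ltxx.
move: hA hB; rewrite hp2 !dvdn2 !negbK => hA hB.
have hd : ((denq q)%:~R : K) != 0.
  by apply/eqP => h; move: hB0; rewrite -nint h n0 eqxx.
have -> : (ratr q - 1 : K) =
   (((numq q)%:~R - 1) - ((denq q)%:~R - 1)) / (denq q)%:~R.
  by rewrite /ratr; field.
rewrite nDiv nint -/B.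
rewrite (@nnat_ndvd B) ?hp2 ?dvdn2 ?hB // divr1.
by apply: nBlt; apply: oddint.
Qed.

Lemma unit2 u : nrm u = 1 -> nrm (u - 1) < 1.
Proof.
move=> hu.
case: HK => _ [] _ [] _ [] _ [] _ [] _ hd.
have [q hq] := hd u 1 ltr01.
have e : nrm (ratr q : K) = 1.
  have -> : (ratr q : K) = -(u - ratr q) + u by ring.
  by rewrite nD_eq // nN hu.
have -> : u - 1 = (u - ratr q) + (ratr q - 1) by ring.
by apply: nDlt => //; apply: rat_unit2.
Qed.
End Two.


Lemma hensel (c w : K) : nrm (2%:R : K) = 1 -> nrm w = 1 -> nrm (c - w ^+ 2) < 1 ->
  exists t, t ^+ 2 = c.
Proof.
move=> h2 hw hc.
set e := c - w ^+ 2 in hc.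
set E := nrm e.
have E0 : 0 <= E := n_ge0 e.
have hw2 : nrm (2%:R * w) = 1 by rewrite nM h2 hw mulr1.
have w20 : 2%:R * w != 0 by apply/eqP => /n_eq0 h; move: hw2; rewrite h => /eqP; rewrite eq_sym oner_eq0.
set u := (2%:R * w)^-1.
have hu : nrm u = 1 by rewrite nV hw2 invr1.
pose F := fun h : K => (e - h ^+ 2) * u.
pose hs := fun n => iter n F (0 : K).
have hFd : forall x y, nrm (F x - F y) = nrm (y - x) * nrm (x + y).
  by move=> x y; rewrite -nM -[RHS]mulr1 -hu -nM /F; congr nrm; ring.
have hb : forall n, nrm (hs n) <= E.
  elim => [|n IH]; first by rewrite /hs /= n0.
  rewrite /hs /= -/(hs n) /F nM hu mulr1.
  apply: nBle => //; rewrite nX.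
  have := n_ge0 (hs n); have := ltW hc; rewrite -/E => h1 h0.
  nra.
have hb1 : forall n, nrm (hs n) <= 1 by move=> n; apply: le_trans (hb n) (ltW hc).
have hstep : forall n, nrm (hs n.+1 - hs n) <= E ^+ n.+1.
  elim => [|n IH].
    rewrite /hs /= subr0 /F.
    have -> : (e - 0 ^+ 2) * u = e * u by ring.
    by rewrite nM hu mulr1 expr1.
  have -> : hs n.+2 - hs n.+1 = F (hs n.+1) - F (hs n) by [].
  rewrite hFd exprS mulrC.
  apply: ler_pM => //; [exact: n_ge0 | exact: n_ge0 | by apply: nDle | by rewrite nB].
have hcau : forall n k, nrm (hs (n + k)%N - hs n) <= E ^+ n.+1.
  move=> n; elim => [|k IH]; first by rewrite addn0 subrr n0 exprn_ge0.
  have -> : hs (n + k.+1)%N - hs n = (hs (n + k).+1 - hs (n + k)%N) + (hs (n + k)%N - hs n).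
    by rewrite addnS; ring.
  apply: nDle => //; apply: le_trans (hstep _) _.
  by apply: ler_wiXn2l => //; [exact: ltW | rewrite ltnS leq_addr].
have hcau2 : forall N m, (N <= m)%N -> nrm (hs m - hs N) <= E ^+ N.+1.
  by move=> N m /subnKC <-; apply: hcau.
case: HK => _ [] _ [] _ [] _ [] _ [] hcomp _.
have [l hl] : exists l, forall eps, 0 < eps -> exists N, forall n, (N <= n)%N -> nrm (hs n - l) < eps.
  apply: hcomp => eps eps0.
  have [N hN] := @geo R E eps E0 hc eps0.
  exists N => m n hm hn.
  have -> : hs m - hs n = (hs m - hs N) - (hs n - hs N) by ring.
  have hEN : E ^+ N.+1 <= E ^+ N by apply: ler_wiXn2l => //; exact: ltW.
  by apply: nBlt; apply: le_lt_trans hN; apply: le_trans hEN; apply: hcau2.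
have hl1 : nrm l <= 1.
  have [N hN] := hl 1 ltr01.
  have -> : l = hs N - (hs N - l) by ring.
  by apply: nBle => //; apply: ltW; apply: hN.
have hfix : l = F l.
  apply/eqP; rewrite -subr_eq0; apply/eqP/n_eq0.
  apply/eqP; rewrite eq_le n_ge0 andbT leNgt; apply/negP => hpos.
  have [N hN] := hl _ hpos.
  have e1 : l - F l = - (hs N.+1 - l) + (F (hs N) - F l) by rewrite /hs /=; ring.
  have g1 := hN N.+1 (leqnSn N).
  have g2 := hN N (leqnn N).
  suff : nrm (- (hs N.+1 - l) + (F (hs N) - F l)) < nrm (l - F l) by rewrite -e1 ltxx.
  apply: nDlt; first by rewrite nN.
  rewrite hFd; apply: le_lt_trans g2; rewrite nB; apply: ler_piMr; first exact: n_ge0.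
  exact: nDle.
exists (w + l).
have hl' : l * (2%:R * w) = e - l ^+ 2.
  by rewrite [in LHS]hfix /F /u divfK.
have : (w + l) ^+ 2 = w ^+ 2 + (l * (2%:R * w) + l ^+ 2) by ring.
rewrite hl' /e => ->; ring.
Qed.

Lemma n3 : p != 3%N -> nrm (3%:R : K) = 1.
Proof. by move=> h; apply: nnat_ndvd; rewrite dvdn_prime2. Qed.
Lemma n2_odd : p != 2%N -> nrm (2%:R : K) = 1.
Proof. by move=> h; apply: nnat_ndvd; rewrite dvdn_prime2. Qed.
Lemma n2_ne0 : (2%:R : K) != 0.
Proof.
apply/eqP => /n_eq0 h.
have [e2|ne2] := eqVneq p 2%N.
  by move: np; rewrite e2 h => /eqP; rewrite eq_sym invr_eq0 pnatr_eq0.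
by move: (n2_odd ne2); rewrite h => /eqP; rewrite eq_sym oner_eq0.
Qed.

Lemma nsq1 x : nrm (x ^+ 2) = 1 -> nrm x = 1.
Proof. rewrite nX => h; have := n_ge0 x; nra. Qed.

Section Dyn.
Variables (a xs : K).
Hypothesis ha : nrm a < 1.
Hypothesis hfe : xs ^+ 2 + a * xs - 1 = 0.
Hypothesis hp3 : p != 3%N.

Let f := fun x : K => x ^+ 3 + a * x ^+ 2.
Let Q := fun g : K => g ^+ 2 + 3 * xs * g + 3.

Lemma nxs : nrm xs = 1.
Proof.
have e : xs * (xs + a) = 1 by rewrite -[RHS]addr0 -hfe; ring.
have := congr1 nrm e; rewrite nM n1.
case: (ltgtP (nrm xs) 1) => // h.
- have h2 : nrm (xs + a) < 1 by apply: nDlt.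
  have := n_ge0 xs; have := n_ge0 (xs + a); nra.
- rewrite nD_eq' ?(lt_trans ha h) // => h2; nra.
Qed.

Lemma f_xs : f xs = xs.
Proof. apply/eqP; rewrite -subr_eq0; apply/eqP; rewrite /f -[RHS](mulr0 xs) -hfe; ring. Qed.

Lemma f_shift y : f (xs + y) - xs =
  y * ((3 - a * xs) + y * (3 * xs + a + y)) + (xs + 3 * y) * (xs ^+ 2 + a * xs - 1).
Proof. rewrite /f; ring. Qed.

Lemma f_small y : nrm y < 1 -> nrm (f (xs + y) - xs) = nrm y.
Proof.
move=> hy; have hy1 := ltW hy.
rewrite f_shift hfe mulr0 addr0 nM.
have h3 : nrm (3 - a * xs) = 1.
  rewrite nD_eq' ?n3 // nN nM nxs mulr1 //.
rewrite nD_eq' ?h3 ?mulr1 //.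
rewrite nM; apply: le_lt_trans hy; apply: ler_piMr; first exact: n_ge0.
apply: nDle => //.
apply: nDle; last exact: ltW.
by rewrite nM nxs mulr1 nnat_le1.
Qed.

Lemma f_unit_e y : f (xs + y) - xs = y * (Q y + a * (y - xs)).
Proof. by rewrite f_shift hfe mulr0 addr0 /Q; ring. Qed.

Lemma f_unit_lt y : nrm y = 1 -> nrm (Q y) < 1 -> nrm (f (xs + y) - xs) < 1.
Proof.
move=> hy hQ.
have ha2 : nrm (a * (y - xs)) < 1.
  rewrite nM; apply: le_lt_trans ha; apply: ler_piMr; first exact: n_ge0.
  by apply: nBle; rewrite ?hy ?nxs.
by rewrite f_unit_e nM hy mul1r; apply: nDlt.
Qed.

Lemma f_unit_eq y : nrm y = 1 -> ~ nrm (Q y) < 1 -> nrm (f (xs + y) - xs) = 1.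
Proof.
move=> hy hQn.
have hQ : nrm (Q y) <= 1.
  rewrite /Q; apply: nDle; last exact: nnat_le1.
  apply: nDle; first by rewrite nX hy expr1n.
  by rewrite !nM hy nxs !mulr1 nnat_le1.
have ha2 : nrm (a * (y - xs)) < 1.
  rewrite nM; apply: le_lt_trans ha; apply: ler_piMr; first exact: n_ge0.
  by apply: nBle; rewrite ?hy ?nxs.
have hQ1 : nrm (Q y) = 1.
  by apply/eqP; rewrite eq_le hQ leNgt; apply/negP.
by rewrite f_unit_e nM hy mul1r nD_eq' hQ1.
Qed.

End Dyn.

Lemma main_aux (hp3 : p != 3%N) (a : K) (ha : nrm a < 1) (s : K)
    (hs : s ^+ 2 = a ^+ 2 + 4) :
  let f := fun x : K => x ^+ 3 + a * x ^+ 2 in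
  let xs := (- a + s) / 2 in
  ((forall x : K, SI nrm f xs x <-> ballp nrm xs 1 x) <->
     (exists g : K, nrm g = 1 /\ nrm (g ^+ 2 + 3 * xs * g + 3) < 1))
  /\
  ((exists g : K, nrm g = 1 /\ nrm (g ^+ 2 + 3 * xs * g + 3) < 1) <->
     (exists t : K, t ^+ 2 = - 3)).
Proof.
move=> f xs.
have h20 := n2_ne0.
have hfe : xs ^+ 2 + a * xs - 1 = 0.
  have h4 : (4 : K) != 0.
    by rewrite (_ : (4 : K) = 2 * 2); [rewrite mulf_neq0 | ring].
  have : (xs ^+ 2 + a * xs - 1) * 4 = s ^+ 2 - (a ^+ 2 + 4) by rewrite /xs; field.
  by rewrite hs subrr => /eqP; rewrite mulf_eq0 (negPf h4) orbF => /eqP.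
clearbody xs.
have hxs : nrm xs = 1 by apply: (@nxs _ _ ha hfe).
have inv : forall rho, (forall y, nrm y = rho -> nrm (f (xs + y) - xs) = rho) ->
    forall x, spherep nrm xs rho x -> forall n, spherep nrm xs rho (iter n f x).
  move=> rho H x hx; elim => [|n IH] //=.
  rewrite /spherep in IH *.
  have -> : iter n f x = xs + (iter n f x - xs) by rewrite addrC subrK.
  by apply: H.
have small : forall rho, rho < 1 -> forall y, nrm y = rho -> nrm (f (xs + y) - xs) = rho.
  move=> rho hr y hy; rewrite -hy; apply: (@f_small _ _ ha hfe) => //; by rewrite hy.
have fx : f xs = xs by apply: (@f_xs _ _ hfe).
split; first split.
- move=> H; apply: NNPP => nP2.
  have hSI : SI nrm f xs (xs + 1).
    exists p%:R; split; last by rewrite /ballp addrAC subrr add0r n1 p_gt1.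
    split => // rho hr x hx n _; apply: inv x hx n => y hy.
    case: (ltgtP rho 1) => h.
    + exact: small.
    + have := @nval_gt1 y; rewrite hy => /(_ h) hle.
      by move: hr; rewrite ltNge hle.
    + rewrite h in hy *; apply: (@f_unit_eq _ _ ha hfe) => // hq.
      by apply: nP2; exists y.
  have := (H _).1 hSI; rewrite /ballp addrAC subrr add0r n1 ltxx //.
- move=> [g [hg hQ]] x; split.
  + move=> [r [[_ hsd] hx]]; rewrite /ballp ltNge; apply/negP => h1.
    have r1 : 1 < r := le_lt_trans h1 hx.
    have hz : spherep nrm xs 1 (xs + g) by rewrite /spherep addrAC subrr add0r.
    have := hsd 1 r1 (xs + g) hz 1%N (leqnn 1).
    rewrite /spherep /= => e.
    have := @f_unit_lt _ _ ha hfe _ hg hQ; rewrite e ltxx //.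
  + move=> hx; exists 1; split => //; split => // rho hr y hy n _.
    by apply: inv => // z hz; apply: small.
have h3 : nrm (3 : K) = 1 := n3 hp3.
have n3x : forall z, nrm (3 * z) <= nrm z.
  by move=> z; rewrite nM; apply: ler_piMl; [exact: n_ge0 | exact: nnat_le1].
have n9ax : nrm (9 * a * xs) < 1.
  rewrite !nM hxs mulr1; apply: le_lt_trans ha.
  by apply: ler_piMl; [exact: n_ge0 | exact: nnat_le1].
have [e2|ne2] := eqVneq p 2%N.
- split.
  + move=> [g [hg hQ]]; exfalso.
    have h7 : nrm (7%:R : K) = 1 by apply: nnat_ndvd; rewrite e2.
    have hg2 : nrm (g ^+ 2 - 1) < 1 by apply: (unit2 e2); rewrite nX hg expr1n.
    have hxg : nrm (xs * g - 1) < 1 by apply: (unit2 e2); rewrite nM hxs hg mulr1.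
    have e : g ^+ 2 + 3 * xs * g + 3 = 7%:R + ((g ^+ 2 - 1) + 3 * (xs * g - 1)) by ring.
    move: hQ; rewrite e nD_eq' ?h7 ?ltxx //.
    by apply: nDlt => //; apply: le_lt_trans (n3x _) hxg.
  + move=> [t ht]; exfalso.
    have htn : nrm t = 1 by apply: nsq1; rewrite ht nN h3.
    set w := (t - 1) / 2.
    have h4 : (4 : K) != 0.
      by rewrite (_ : (4 : K) = 2 * 2); [rewrite mulf_neq0 | ring].
    have hw : w ^+ 2 + w + 1 = 0.
      have : (w ^+ 2 + w + 1) * 4 = t ^+ 2 + 3 by rewrite /w; field.
      by rewrite ht addNr => /eqP; rewrite mulf_eq0 (negPf h4) orbF => /eqP.
    have ew : w * (w + 1) = -1 by rewrite -[RHS]add0r -hw; ring.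
    have hwn : nrm w = 1.
      have := congr1 nrm ew; rewrite nM nN1.
      case: (ltgtP (nrm w) 1) => // h.
      * rewrite nD_eq ?n1 // mulr1 => hh; by move: h; rewrite hh ltxx.
      * rewrite nD_eq' ?n1 // => hh; nra.
    have hw1 := @unit2 e2 _ hwn.
    have e : w ^+ 2 + w + 1 = 3 + (w - 1) * (w + 2) by ring.
    have : nrm (w ^+ 2 + w + 1) = 1.
      rewrite e nD_eq' ?h3 // nM; apply: le_lt_trans hw1; apply: ler_piMr; first exact: n_ge0.
      by apply: nDle; rewrite ?hwn ?nnat_le1.
    by rewrite hw n0 => /eqP; rewrite eq_sym oner_eq0.
- have h2 : nrm (2 : K) = 1 := n2_odd ne2.
  have h4 : nrm (4 : K) = 1.
    by rewrite (_ : (4 : K) = 2 * 2) ?nM ?h2 ?mulr1 //; ring.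
  split.
  + move=> [g [hg hQ]].
    set w := 2 * g + 3 * xs.
    have ew : - 3 - w ^+ 2 = - (4 * (g ^+ 2 + 3 * xs * g + 3)) + 9 * a * xs
        - 9 * (xs ^+ 2 + a * xs - 1) by rewrite /w; ring.
    rewrite hfe mulr0 subr0 in ew.
    have hlt : nrm (- 3 - w ^+ 2) < 1.
      by rewrite ew; apply: nDlt => //; rewrite nN nM h4 mul1r.
    have hwn : nrm w = 1.
      apply: nsq1.
      have -> : w ^+ 2 = - 3 + - (- 3 - w ^+ 2) by ring.
      rewrite nD_eq'; first by rewrite nN h3.
      by rewrite !nN h3.
    exact: hensel h2 hwn hlt.
  + move=> [t ht].
    have htn : nrm t = 1 by apply: nsq1; rewrite ht nN h3.
    exists ((t - 3 * xs) / 2).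
    set g := (t - 3 * xs) / 2.
    have eQ : (g ^+ 2 + 3 * xs * g + 3) * 4 =
        9 * a * xs - 9 * (xs ^+ 2 + a * xs - 1) + (t ^+ 2 + 3) by rewrite /g; field.
    rewrite hfe ht mulr0 subr0 addNr addr0 in eQ.
    have hQ : nrm (g ^+ 2 + 3 * xs * g + 3) < 1.
      by move: (congr1 nrm eQ); rewrite nM h4 mulr1 => ->.
    split => //.
    have hle : nrm g <= 1.
      rewrite /g nDiv h2 divr1; apply: nBle; first by rewrite htn.
      by apply: le_trans (n3x _) _; rewrite hxs.
    apply/eqP; rewrite eq_le hle /= leNgt; apply/negP => hlt.
    have e : g ^+ 2 + 3 * xs * g + 3 = 3 + g * (g + 3 * xs) by ring.
    move: hQ; rewrite e nD_eq'; first by rewrite h3 ltxx.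
    rewrite h3.
    rewrite nM; apply: le_lt_trans hlt; apply: ler_piMr; first exact: n_ge0.
    apply: nDle => //.
    by apply: le_trans (n3x _) _; rewrite hxs.
Qed.

End Basic.

Theorem lemma4p5 (p : nat) (R : realType) (K : fieldType) (nrm : K -> R)
    (HK : is_Qp p nrm) (hp : prime p) (hp3 : p != 3%N)
    (a : K) (ha : nrm a < 1) (s : K) (hs : s ^+ 2 = a ^+ 2 + 4) :
  let f := fun x : K => x ^+ 3 + a * x ^+ 2 in
  let xs := (- a + s) / 2 in
  ((forall x : K, SI nrm f xs x <-> ballp nrm xs 1 x) <->
     (exists g : K, nrm g = 1 /\ nrm (g ^+ 2 + 3 * xs * g + 3) < 1))
  /\
  ((exists g : K, nrm g = 1 /\ nrm (g ^+ 2 + 3 * xs * g + 3) < 1) <->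
     (exists t : K, t ^+ 2 = - 3)).
Proof. exact: (@main_aux p R K nrm HK hp hp3 a ha s hs). Qed.
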